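(* As formal power series in $q$, $$\sum_{n=0}^\infty \overline{bt}(2n)q^n=8q\frac{f_2^7f_4^3f_8^2}{f_1^{18}}+\frac{f_2^{17}f_4}{f_1^{22}f_8^2}.$$
   Context: For a positive integer $k$ let $f_k:=\prod_{m=1}^\infty(1-q^{mk})$. The function $\overline{bt}(n)$ is defined by $\sum_{n\ge0}\overline{bt}(n)q^n=\frac{f_4^3}{f_1^6f_2^3}$. *)

(* Defs.v *)
From mathcomp Require Import all_boot all_order all_algebra.
Set Implicit Arguments. Unset Strict Implicit. Unset Printing Implicit Defensive.
Import GRing.Theory Num.Theory.
Local Open Scope ring_scope.

Definition fps := nat -> int.

Definition fps_one : fps := fun n => (n == 0)%N%:R.
Definition fps_q : fps := fun n => (n == 1)%N%:R.
Definition fps_add (a b : fps) : fps := fun n => a n + b n.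
Definition fps_sub (a b : fps) : fps := fun n => a n - b n.
Definition fps_scale (c : int) (a : fps) : fps := fun n => c * a n.
Definition fps_mul (a b : fps) : fps :=
  fun n => \sum_(i < n.+1) a i * b (n - i)%N.
Definition fps_pow (a : fps) (e : nat) : fps := iter e (fps_mul a) fps_one.
(* multiplicative inverse of a series with constant term 1:
   1/a = sum_{j>=0} (1 - a)^j, where only j <= n contributes to coefficient n *)
Definition fps_inv (a : fps) : fps :=
  fun n => \sum_(j < n.+1) fps_pow (fps_sub fps_one a) j n.

(* f_k = prod_{m>=1} (1 - q^{mk}); for k >= 1 its n-th coefficient equals the
   n-th coefficient of the finite product over 1 <= m <= n. *)
Definition fk (k : nat) : fps :=
  fun n => (\prod_(1 <= m < n.+1) (1 - 'X^(m * k)%N) : {poly int})`_n.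

Definition btbar_series : fps :=
  fps_mul (fps_pow (fk 4) 3) (fps_mul (fps_pow (fps_inv (fk 1)) 6) (fps_pow (fps_inv (fk 2)) 3)).
Definition btbar (n : nat) : int := btbar_series n.

(* Main.v *)
Require Import Defs.
From HB Require Import structures.
From mathcomp Require Import all_boot all_order all_algebra.
From mathcomp Require Import boolp.
From mathcomp Require Import ring lra zify.
Set Implicit Arguments. Unset Strict Implicit. Unset Printing Implicit Defensive.
Import GRing.Theory Num.Theory.
Local Open Scope ring_scope.

Definition ps := nat -> int.
HB.instance Definition _ := gen_eqMixin ps.
HB.instance Definition _ := gen_choiceMixin ps.

Lemma psext (a b : ps) : (forall n, a n = b n) -> a = b.
Proof. by move=> h; apply: funext. Qed.

Definition ps0 : ps := fun _ => 0.
Definition psopp (a : ps) : ps := fun n => - a n.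

Lemma ps_addA : associative (fps_add : ps -> ps -> ps).
Proof. by move=> a b c; apply: psext => n; rewrite /fps_add addrA. Qed.
Lemma ps_addC : commutative (fps_add : ps -> ps -> ps).
Proof. by move=> a b; apply: psext => n; rewrite /fps_add addrC. Qed.
Lemma ps_add0 : left_id ps0 (fps_add : ps -> ps -> ps).
Proof. by move=> a; apply: psext => n; rewrite /fps_add /ps0 add0r. Qed.
Lemma ps_addN : left_inverse ps0 psopp (fps_add : ps -> ps -> ps).
Proof. by move=> a; apply: psext => n; rewrite /fps_add /ps0 /psopp addNr. Qed.

HB.instance Definition _ := GRing.isZmodule.Build ps ps_addA ps_addC ps_add0 ps_addN.

Definition ofp (p : {poly int}) : ps := fun n => p`_n.
Definition eqN (N : nat) (a b : ps) := forall i, (i < N)%N -> a i = b i.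

Lemma ofp_mul p r : fps_mul (ofp p) (ofp r) = ofp (p * r).
Proof. by apply: psext => n; rewrite /ofp /fps_mul coefM. Qed.

Lemma eqN_mul N (a a' b b' : ps) : eqN N a a' -> eqN N b b' ->
  eqN N (fps_mul a b) (fps_mul a' b').
Proof.
move=> ha hb i iN; rewrite /fps_mul; apply: eq_bigr => j _.
have jn : (j <= i)%N by rewrite -ltnS.
rewrite ha ?hb //; [exact: leq_ltn_trans (leq_subr _ _) iN|exact: leq_ltn_trans jn iN].
Qed.

Definition tr (N : nat) (a : ps) : {poly int} := \poly_(i < N) a i.
Lemma eqN_tr N a : eqN N a (ofp (tr N a)).
Proof. by move=> i iN; rewrite /ofp /tr coef_poly iN. Qed.

Lemma eqN_refl N a : eqN N a a. Proof. by []. Qed.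
Arguments eqN_refl : clear implicits.
Lemma eqN_sym N a b : eqN N a b -> eqN N b a. Proof. by move=> h i iN; rewrite h. Qed.
Lemma eqN_trans N a b c : eqN N a b -> eqN N b c -> eqN N a c.
Proof. by move=> h1 h2 i iN; rewrite h1 ?h2. Qed.

Lemma eqN_all (a b : ps) : (forall N, eqN N a b) -> a = b.
Proof. by move=> h; apply: psext => n; apply: (h n.+1). Qed.

Lemma ps_mulA : associative (fps_mul : ps -> ps -> ps).
Proof.
move=> a b c; apply: eqN_all => N.
have ea := @eqN_tr N a; have eb := @eqN_tr N b; have ec := @eqN_tr N c.
refine (eqN_trans (eqN_mul ea (eqN_mul eb ec)) _).
rewrite !ofp_mul mulrA -!ofp_mul.
by apply: eqN_mul; [apply: eqN_mul|]; apply: eqN_sym.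
Qed.

Lemma ps_mulC : commutative (fps_mul : ps -> ps -> ps).
Proof.
move=> a b; apply: eqN_all => N.
have ea := @eqN_tr N a; have eb := @eqN_tr N b.
refine (eqN_trans (eqN_mul ea eb) _).
rewrite !ofp_mul mulrC -!ofp_mul.
by apply: eqN_mul; apply: eqN_sym.
Qed.

Lemma ofp1 : fps_one = ofp 1.
Proof. by apply: psext => n; rewrite /ofp coef1 /fps_one; case: n. Qed.

Lemma ps_mul1 : left_id fps_one (fps_mul : ps -> ps -> ps).
Proof.
move=> a; apply: eqN_all => N.
have ea := @eqN_tr N a.
refine (eqN_trans (eqN_mul (@eqN_refl N fps_one) ea) _).
by rewrite ofp1 ofp_mul mul1r; apply: eqN_sym.
Qed.

Lemma ps_mulDl : left_distributive (fps_mul : ps -> ps -> ps) fps_add.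
Proof.
move=> a b c; apply: psext => n; rewrite /fps_mul /fps_add -big_split /=.
by apply: eq_bigr => i _; rewrite mulrDl.
Qed.

Lemma ps_one_neq0 : fps_one != (ps0 : ps).
Proof. by apply/eqP => h; have := congr1 (fun f : ps => f 0%N) h. Qed.

HB.instance Definition _ := GRing.Zmodule_isComNzRing.Build ps
  ps_mulA ps_mulC ps_mul1 ps_mulDl ps_one_neq0.

Lemma psmulE (a b : ps) : a * b = fps_mul a b. Proof. by []. Qed.
Lemma psaddE (a b : ps) : a + b = fps_add a b. Proof. by []. Qed.
Lemma ps1E : (1 : ps) = fps_one. Proof. by []. Qed.


Lemma psaddC n (a b : ps) : (a + b) n = a n + b n. Proof. by []. Qed.
Lemma psoppC n (a : ps) : (- a) n = - a n. Proof. by []. Qed.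
Lemma pssubC n (a b : ps) : (a - b) n = a n - b n. Proof. by []. Qed.
Lemma psmulC n (a b : ps) : (a * b) n = \sum_(i < n.+1) a i * b (n - i)%N.
Proof. by []. Qed.
Lemma ps1C n : (1 : ps) n = (n == 0)%N%:R. Proof. by []. Qed.
Lemma ps0C n : (0 : ps) n = 0. Proof. by []. Qed.

Lemma pssumC n I (r : seq I) (P : pred I) (F : I -> ps) :
  (\sum_(i <- r | P i) F i) n = \sum_(i <- r | P i) F i n.
Proof. by elim/big_rec2: _ => // i y1 y2 _ <-. Qed.

Lemma psMnC n (a : ps) k : (a *+ k) n = a n *+ k.
Proof. by elim: k => [|k IH]; rewrite ?mulr0n // !mulrS psaddC IH. Qed.

Lemma psnatmulC n k (a : ps) : (k%:R * a) n = k%:R * a n.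
Proof. by rewrite mulr_natl psMnC mulr_natl. Qed.

Lemma eqN_add N (a a' b b' : ps) : eqN N a a' -> eqN N b b' -> eqN N (a + b) (a' + b').
Proof. by move=> h1 h2 i iN; rewrite !psaddC h1 ?h2. Qed.
Lemma eqN_opp N (a a' : ps) : eqN N a a' -> eqN N (- a) (- a').
Proof. by move=> h1 i iN; rewrite !psoppC h1. Qed.
Lemma eqN_sub N (a a' b b' : ps) : eqN N a a' -> eqN N b b' -> eqN N (a - b) (a' - b').
Proof. by move=> h1 h2; apply: eqN_add => //; apply: eqN_opp. Qed.
Lemma eqN_mulr N (a a' b b' : ps) : eqN N a a' -> eqN N b b' -> eqN N (a * b) (a' * b').
Proof. exact: eqN_mul. Qed.
Lemma eqN_exp N (a a' : ps) k : eqN N a a' -> eqN N (a ^+ k) (a' ^+ k).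
Proof.
move=> h; elim: k => [|k IH]; first exact: eqN_refl.
by rewrite !exprS; apply: eqN_mulr.
Qed.
Lemma eqN_sum N I (r : seq I) (P : pred I) (F G : I -> ps) :
  (forall i, P i -> eqN N (F i) (G i)) ->
  eqN N (\sum_(i <- r | P i) F i) (\sum_(i <- r | P i) G i).
Proof.
move=> h; elim/big_rec2: _ => [|i y1 y2 Pi IH]; first exact: eqN_refl.
by apply: eqN_add => //; apply: h.
Qed.
Lemma eqN_prod N I (r : seq I) (P : pred I) (F G : I -> ps) :
  (forall i, P i -> eqN N (F i) (G i)) ->
  eqN N (\prod_(i <- r | P i) F i) (\prod_(i <- r | P i) G i).
Proof.
move=> h; elim/big_rec2: _ => [|i y1 y2 Pi IH]; first exact: eqN_refl.
by apply: eqN_mulr => //; apply: h.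
Qed.
Lemma eqN_le N M (a b : ps) : (M <= N)%N -> eqN N a b -> eqN M a b.
Proof. by move=> MN h i iM; apply: h; exact: leq_trans iM MN. Qed.

Definition qq : ps := fps_q.

Lemma qmulC (a : ps) n : (qq * a) n = if n is n'.+1 then a n' else 0.
Proof.
rewrite psmulC; case: n => [|n]; first by rewrite big_ord1 /qq /fps_q /= mul0r.
rewrite big_ord_recl /= /qq /fps_q /= mul0r add0r big_ord_recl /= mul1r subSS subn0.
rewrite big1 ?addr0 // => i _; by rewrite /= mul0r.
Qed.

Lemma qXmulC (a : ps) e n : (qq ^+ e * a) (n + e)%N = a n.
Proof.
elim: e a => [|e IH] a; first by rewrite expr0 mul1r addn0.
by rewrite exprS -mulrA addnS qmulC IH.
Qed.

Lemma qXmulC_lt (a : ps) e n : (n < e)%N -> (qq ^+ e * a) n = 0.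
Proof.
elim: e a n => [|e IH] a n //.
rewrite exprS -mulrA; case: n => [|n] /=; first by rewrite qmulC.
by rewrite ltnS qmulC; apply: IH.
Qed.

Lemma qXC e n : (qq ^+ e) n = (n == e)%:R.
Proof.
case: (ltngtP n e) => h.
- by rewrite -[qq ^+ e]mulr1 qXmulC_lt.
- rewrite -(subnK (ltnW h)) -[qq ^+ e]mulr1 qXmulC ps1C.
  by rewrite subn_eq0 leqNgt h.
- by rewrite h -[qq ^+ e]mulr1 -[e]add0n qXmulC ps1C eqxx.
Qed.

Lemma qX_cancel e (a b : ps) : qq ^+ e * a = qq ^+ e * b -> a = b.
Proof. by move=> h; apply: psext => n; rewrite -(qXmulC a e) -(qXmulC b e) h. Qed.

Lemma two_cancel (a b : ps) : 2%:R * a = 2%:R * b -> a = b.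
Proof.
move=> h; apply: psext => n; have := congr1 (fun f : ps => f n) h.
rewrite !psnatmulC => /eqP; rewrite -subr_eq0 -mulrBr mulf_eq0 /= subr_eq0.
by move/eqP.
Qed.

Lemma eqN_two_cancel N (a b : ps) : eqN N (2%:R * a) (2%:R * b) -> eqN N a b.
Proof.
move=> h i iN; have := h i iN.
rewrite !psnatmulC => /eqP; rewrite -subr_eq0 -mulrBr mulf_eq0 /= subr_eq0.
by move/eqP.
Qed.

Lemma eqN_qX0 N e : (N <= e)%N -> eqN N (qq ^+ e) 0.
Proof.
move=> h i iN; rewrite qXC ps0C; case: eqP => // ie.
by move: iN; rewrite ie ltnNge h.
Qed.

Lemma fps_powE (a : ps) e : fps_pow a e = a ^+ e.
Proof. by elim: e => [|e IH] //=; rewrite exprS -IH. Qed.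

Lemma fps_scaleE (a : ps) : fps_scale 8 a = 8%:R * a.
Proof. by apply: psext => n; rewrite psnatmulC. Qed.

Lemma fps_addE (a b : ps) : fps_add a b = a + b. Proof. by []. Qed.
Lemma fps_mulE (a b : ps) : fps_mul a b = a * b. Proof. by []. Qed.

Lemma shift_q (u : ps) : u 0%N = 0 -> u = qq * (fun n => u n.+1).
Proof. by move=> h; apply: psext => -[|n]; rewrite qmulC. Qed.

Lemma sum_ord_split (F : nat -> int) n N : (n <= N)%N ->
  (forall j, (n <= j < N)%N -> F j = 0) ->
  \sum_(j < N) F j = \sum_(j < n) F j.
Proof.
move=> nN h; rewrite -!(big_mkord xpredT) (@big_cat_nat _ _ _ n 0 N) //=.
rewrite [X in _ + X]big_nat_cond [X in _ + X]big1 ?addr0 //.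
by move=> j /andP[/h].
Qed.

Lemma fps_inv_mul (a : ps) : a 0%N = 1 -> (fps_inv a : ps) * a = 1.
Proof.
move=> a0; set u : ps := 1 - a.
have u0 : u 0%N = 0 by rewrite /u pssubC a0 ps1C subrr.
have uE := shift_q u0.
have uj : forall j n, (n < j)%N -> (u ^+ j) n = 0.
  by move=> j n nj; rewrite uE exprMn qXmulC_lt.
apply: eqN_all => N.
set S := \sum_(j < N) u ^+ j.
have eS : eqN N (fps_inv a) S.
  move=> n nN; rewrite /S pssumC /fps_inv.
  rewrite (@sum_ord_split (fun j => (u ^+ j) n) n.+1 N) //; last by move=> j /andP[nj _]; apply: uj.
  by apply: eq_bigr => j _; rewrite fps_powE.
refine (eqN_trans (eqN_mulr eS (eqN_refl _ _)) _).
have -> : a = 1 - u by rewrite /u opprB addrC subrK.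
have -> : S * (1 - u) = 1 - u ^+ N.
  by rewrite /S -opprB mulrN mulrC -subrX1 opprB.
by move=> i iN; rewrite pssubC uj // subr0.
Qed.

Lemma ofp1' : ofp 1 = 1. Proof. by rewrite -ofp1. Qed.
Lemma ofpM p r : ofp (p * r) = ofp p * ofp r. Proof. by rewrite psmulE ofp_mul. Qed.
Lemma ofpB p r : ofp (p - r) = ofp p - ofp r.
Proof. by apply: psext => n; rewrite pssubC /ofp coefB. Qed.
Lemma ofpXn e : ofp 'X^e = qq ^+ e.
Proof. by apply: psext => n; rewrite qXC /ofp coefXn. Qed.
Lemma ofp_prod I (r : seq I) (P : pred I) (F : I -> {poly int}) :
  ofp (\prod_(i <- r | P i) F i) = \prod_(i <- r | P i) ofp (F i).
Proof. by elim/big_rec2: _ => [|i y1 y2 _ <-]; rewrite ?ofp1' // ofpM. Qed.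

Definition poch (R : comNzRingType) (Q : R) (k : nat) : R := \prod_(m < k) (1 - Q ^+ m.+1).
Definition pr (d K : nat) : ps := \prod_(1 <= m < K.+1) (1 - qq ^+ (m * d)).

Lemma eqN_prod1 N I (r : seq I) (P : pred I) (F : I -> ps) :
  (forall i, P i -> eqN N (F i) 1) -> eqN N (\prod_(i <- r | P i) F i) 1.
Proof.
move=> h; refine (eqN_trans (@eqN_prod N I r P F (fun _ => 1) h) _).
by rewrite big1 //; exact: eqN_refl.
Qed.

Lemma pr_stable d n K : (0 < d)%N -> (n <= K)%N -> eqN n.+1 (pr d K) (pr d n).
Proof.
move=> d0 nK; rewrite /pr (@big_cat_nat _ _ _ n.+1 1 K.+1) //=.
rewrite -[X in eqN _ _ X]mulr1; apply: eqN_mulr; first exact: eqN_refl.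
rewrite big_nat_cond; apply: eqN_prod1 => m /andP[/andP[nm _] _].
rewrite -[X in eqN _ _ X]subr0; apply: eqN_sub; first exact: eqN_refl.
by apply: eqN_qX0; apply: leq_trans nm _; rewrite leq_pmulr.
Qed.

Lemma fk_pr d n : fk d n = pr d n n.
Proof.
rewrite /fk /pr -[LHS]/(ofp _ n) ofp_prod.
congr (_ n); apply: eq_bigr => m _; by rewrite ofpB ofp1' ofpXn.
Qed.


Lemma fk_eqN d N K : (0 < d)%N -> (N <= K)%N -> eqN N (fk d) (pr d K).
Proof.
move=> d0 NK n nN; rewrite fk_pr.
by rewrite (@pr_stable d n K) //; apply: ltnW; apply: leq_trans nN NK.
Qed.

Lemma poch_pr d K : poch (qq ^+ d) K = pr d K.
Proof.
rewrite /poch /pr big_add1 /= big_mkord; apply: eq_bigr => m _.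
by rewrite -exprM mulnC.
Qed.

Lemma fk_poch d N K : (0 < d)%N -> (N <= K)%N -> eqN N (fk d) (poch (qq ^+ d) K).
Proof. by move=> d0 NK; rewrite poch_pr; apply: fk_eqN. Qed.

Lemma fk0 d : fk d 0%N = 1.
Proof. by rewrite fk_pr /pr big_geq. Qed.

Fixpoint qb (R : comNzRingType) (q : R) (m i : nat) : R :=
  match m, i with
  | _, 0%N => 1
  | 0%N, _.+1 => 0
  | m'.+1, i'.+1 => qb q m' i'.+1 + q ^+ (m' - i') * qb q m' i'
  end.

Lemma qb0 (R : comNzRingType) (q : R) m : qb q m 0 = 1. Proof. by case: m. Qed.
Lemma qbSS (R : comNzRingType) (q : R) m i :
  qb q m.+1 i.+1 = qb q m i.+1 + q ^+ (m - i) * qb q m i.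
Proof. by []. Qed.

Lemma qb_gt (R : comNzRingType) (q : R) m i : (m < i)%N -> qb q m i = 0.
Proof.
elim: m i => [|m IH] [|i] //= h.
by rewrite !IH ?mulr0 ?addr0 //; apply: ltnW.
Qed.

Lemma qb_id (R : comNzRingType) (q : R) m : qb q m m = 1.
Proof. by elim: m => [|m IH] //=; rewrite qb_gt // subnn expr0 mul1r IH add0r. Qed.

Definition qT (R : comNzRingType) (q x y : R) m i :=
  qb q m i * q ^+ 'C(i, 2) * x ^+ i * y ^+ (m - i).

Lemma qT_step (R : comNzRingType) (q x y : R) m i :
  qT q x y m.+1 i.+1 = y * qT q x y m i.+1 + x * q ^+ m * qT q x y m i.
Proof.
rewrite /qT qbSS.
case: (ltngtP i m) => h.
- have e1 : (m.+1 - i.+1 = (m - i.+1).+1)%N by rewrite subSS subnSK.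
  have e2 : 'C(i.+1, 2) = ('C(i, 2) + i)%N by rewrite binS bin1 addnC.
  have e3 : (m - i = (m - i.+1).+1)%N by rewrite subnSK.
  rewrite e1 e3 e2 !exprD !exprS.
  have e4 : q ^+ m = q ^+ (m - i.+1).+1 * q ^+ i.
    by rewrite -exprD -e3 subnK // ltnW.
  rewrite e4 exprS.
  set A := q ^+ 'C(i, 2); set B := q ^+ i; set C := x ^+ i; set D := y ^+ (m - i.+1).
  set E := q ^+ (m - i.+1); ring.
- have h1 : (m < i.+1)%N by apply: ltnW.
  rewrite (qb_gt _ h1) (qb_gt _ h).
  by rewrite !(mulr0, mul0r, addr0).
- subst i.
  have e2 : 'C(m.+1, 2) = ('C(m, 2) + m)%N by rewrite binS bin1 addnC.
  rewrite (qb_gt _ (ltnSn m)) !subnn e2 !exprD !expr0 !exprS; set A := q ^+ (m - m.+1)%N; ring.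
Qed.

Lemma qbinom (R : comNzRingType) (q x y : R) m :
  \prod_(i < m) (y + x * q ^+ i) = \sum_(i < m.+1) qT q x y m i.
Proof.
elim: m => [|m IH].
  by rewrite big_ord0 big_ord1 /qT qb0 !expr0 !mulr1.
rewrite big_ord_recr /= IH (big_ord_recl m.+1) /=.
have h : forall i : 'I_m.+1, qT q x y m.+1 (lift ord0 i) =
   y * qT q x y m i.+1 + x * q ^+ m * qT q x y m i.
  by move=> i; rewrite lift0 qT_step.
rewrite (eq_bigr _ (fun i _ => h i)) big_split /= -!mulr_sumr.
have -> : qT q x y m.+1 0 = y * qT q x y m 0.
  by rewrite /qT !qb0 !subn0 exprS /= !expr0 !mulr1 !mul1r.
have e1 : \sum_(i < m.+1) qT q x y m i.+1 = \sum_(i < m) qT q x y m i.+1.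
  by rewrite big_ord_recr /= /qT qb_gt // !mul0r addr0.
have e2 : \sum_(i < m.+1) qT q x y m i = qT q x y m 0 + \sum_(i < m) qT q x y m i.+1.
  by rewrite big_ord_recl.
rewrite e1 e2; set S := \sum_(i < m) _; set T0 := qT q x y m 0; set E := q ^+ m.
ring.
Qed.

Lemma pochS (R : comNzRingType) (q : R) k : poch q k.+1 = poch q k * (1 - q ^+ k.+1).
Proof. by rewrite /poch big_ord_recr. Qed.
Lemma poch0 (R : comNzRingType) (q : R) : poch q 0 = 1.
Proof. by rewrite /poch big_ord0. Qed.

Lemma qb_poch (R : comNzRingType) (q : R) m i : (i <= m)%N ->
  qb q m i * poch q i * poch q (m - i) = poch q m.
Proof.
elim: m i => [|m IH] [|i] //.
- by rewrite qb0 !poch0 !mulr1.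
- by rewrite qb0 poch0 subn0 !mul1r.
rewrite ltnS leq_eqVlt => /orP[/eqP ->|lt_im].
  by rewrite qbSS qb_gt // !subnn qb_id expr0 poch0 add0r !mul1r mulr1.
have IH1 := IH _ lt_im; have IH2 := IH _ (ltnW lt_im).
set k := (m - i.+1)%N.
have ek : (m - i = k.+1)%N by rewrite /k subnSK.
have em : (m.+1 = k.+1 + i.+1)%N by rewrite /k -ek addnS subnK // ltnW.
rewrite subSS ek in IH2 *.
rewrite !pochS in IH1 IH2 *.
rewrite -/k in IH1.
rewrite qbSS ek em exprD.
set A := qb q m i.+1; set B := qb q m i; set Pi := poch q i; set Pk := poch q k.
set Qi := q ^+ i.+1; set Qk := q ^+ k.+1.
have -> : (A + Qk * B) * (Pi * (1 - Qi)) * (Pk * (1 - Qk)) =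
  (A * (Pi * (1 - Qi)) * Pk) * (1 - Qk) + Qk * (B * Pi * (Pk * (1 - Qk))) * (1 - Qi).
  by ring.
rewrite IH1 IH2; ring.
Qed.

Definition finv (a : ps) : ps := fps_inv a.
Definition F (d : nat) : ps := fk d.
Definition iF (d : nat) : ps := finv (F d).
Lemma fk_inv d : iF d * F d = 1.
Proof. by apply: fps_inv_mul; rewrite /F fk0. Qed.
Lemma F_poch d N K : (0 < d)%N -> (N <= K)%N -> eqN N (F d) (poch (qq ^+ d) K).
Proof. exact: fk_poch. Qed.

Lemma qb_lim d N m i : (0 < d)%N -> (i <= m)%N -> (N <= i)%N -> (N <= m - i)%N ->
  eqN N (qb (qq ^+ d) m i * F d) 1.
Proof.
move=> d0 im Ni Nmi.
have h := qb_poch (qq ^+ d) im.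
have e1 := @F_poch d N i d0 Ni.
have e2 := @F_poch d N (m - i) d0 Nmi.
have e3 := @F_poch d N m d0 (leq_trans Ni im).
have e4 : eqN N (qb (qq ^+ d) m i * F d * F d) (F d).
  refine (eqN_trans (eqN_mulr (eqN_mulr (eqN_refl _ _) e1) e2) _).
  by rewrite h; apply: eqN_sym.
have -> : qb (qq ^+ d) m i * F d = (qb (qq ^+ d) m i * F d * F d) * iF d.
  by rewrite -mulrA [F d * _]mulrC fk_inv mulr1.
refine (eqN_trans (eqN_mulr e4 (eqN_refl _ _)) _).
by rewrite mulrC fk_inv; exact: eqN_refl.
Qed.

Lemma sum_lim d N m (c : nat -> ps) : (0 < d)%N ->
  (forall i, (i <= m)%N -> (i < N)%N || (m - i < N)%N -> eqN N (c i) 0) ->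
  eqN N ((\sum_(i < m.+1) qb (qq ^+ d) m i * c i) * F d) (\sum_(i < m.+1) c i).
Proof.
move=> d0 hc; rewrite mulr_suml; apply: eqN_sum => i _.
have im : (i <= m)%N by rewrite -ltnS.
case: (boolP ((i < N)%N || (m - i < N)%N)) => h.
  have := hc _ im h => hci.
  refine (eqN_trans (eqN_mulr (eqN_mulr (eqN_refl _ _) hci) (eqN_refl _ _)) _).
  by rewrite mulr0 mul0r; apply: eqN_sym.
move: h; rewrite negb_or -!leqNgt => /andP[Ni Nmi].
rewrite mulrAC; refine (eqN_trans (eqN_mulr (qb_lim d0 im Ni Nmi) (eqN_refl _ _)) _).
by rewrite mul1r; exact: eqN_refl.
Qed.

Lemma bigA (R : Type) (idx : R) (op : Monoid.law idx) (f : nat -> R) a b :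
  \big[op/idx]_(i < a + b) f i =
  op (\big[op/idx]_(i < a) f i) (\big[op/idx]_(i < b) f (a + i)%N).
Proof. by rewrite big_split_ord. Qed.

Lemma bigR (R : Type) (idx : R) (op : Monoid.com_law idx) (f : nat -> R) a :
  \big[op/idx]_(i < a) f i = \big[op/idx]_(i < a) f (a - i.+1)%N.
Proof. by rewrite -(big_mkord xpredT f) big_rev_mkord subn0. Qed.

Lemma prodc (x : ps) a : \prod_(i < a) x = x ^+ a.
Proof. by elim: a => [|a IH]; rewrite ?big_ord0 // big_ord_recr IH exprSr. Qed.

Lemma bin2_dbl i : ('C(i, 2) * 2 = i * i.-1)%N.
Proof.
elim: i => [|i IH] //; rewrite binS bin1 mulnDl IH /=.
case: i {IH} => [|i] //=; nia.
Qed.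

Lemma sum_id a : (\sum_(i < a) i = 'C(a, 2))%N.
Proof. by rewrite -bin2_sum big_mkord. Qed.

Definition dst (a b : nat) : nat := (a - b) + (b - a).

Lemma expU n i : (i <= 2 * n + 2)%N ->
  ('C(i, 2) * 2 + (2 * n + 1) * (2 * n + 2 - i) =
   dst i n.+1 ^ 2 + (n * n.+1 + (2 * n + 1) * n.+1))%N.
Proof.
move=> hi; have hb := bin2_dbl i; rewrite /dst.
case: (leqP i n.+1) => h.
  have -> : (i - n.+1 = 0)%N by apply/eqP; rewrite subn_eq0.
  move: hb; case: i h hi => [|i] h hi hb /=; first by rewrite add0n subn0; nia.
  nia.
have -> : (n.+1 - i = 0)%N by apply/eqP; rewrite subn_eq0 ltnW.
move: hb; case: i h hi => [|i] h hi hb //=; nia.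
Qed.

Lemma tpU n :
  qq ^+ (n * n.+1 + (2 * n + 1) * n.+1) *
    (\prod_(k < n.+1) (1 + qq ^+ (2 * k + 1))) ^+ 2 =
  qq ^+ (n * n.+1 + (2 * n + 1) * n.+1) *
  \sum_(i < (n.+1 + n.+1).+1) qb (qq ^+ 2) (n.+1 + n.+1) i * qq ^+ (dst i n.+1 ^ 2).
Proof.
have H := qbinom (qq ^+ 2) 1 (qq ^+ (2 * n + 1)) (n.+1 + n.+1).
have em : (2 * n + 2 = n.+1 + n.+1)%N by lia.
rewrite mulr_sumr; transitivity (\sum_(i < (n.+1 + n.+1).+1) qT (qq ^+ 2) 1 (qq ^+ (2 * n + 1)) (n.+1 + n.+1) i); last first.
  apply: eq_bigr => i _; rewrite /qT expr1n mulr1 -!exprM -mulrA -exprD mulrCA -exprD.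
  congr (_ * qq ^+ _); have hi : (i <= 2 * n + 2)%N by rewrite em -ltnS.
  have := expU hi; rewrite em; lia.
rewrite -H {H}. rewrite (@bigA _ _ _ (fun i => qq ^+ (2 * n + 1) + 1 * qq ^+ 2 ^+ i) n.+1 n.+1).
have e1 : forall i : 'I_n.+1, qq ^+ (2 * n + 1) + 1 * (qq ^+ 2) ^+ i =
   qq ^+ (2 * i) * (1 + qq ^+ (2 * (n - i) + 1)).
  move=> i; have := ltn_ord i; rewrite ltnS => hi.
  by rewrite mul1r -exprM mulrDr mulr1 -exprD addrC; congr (_ + qq ^+ _); lia.
have e2 : forall j : 'I_n.+1, qq ^+ (2 * n + 1) + 1 * (qq ^+ 2) ^+ (n.+1 + j) =
   qq ^+ (2 * n + 1) * (1 + qq ^+ (2 * j + 1)).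
  by move=> j; rewrite mul1r -exprM mulrDr mulr1 -exprD; congr (_ + qq ^+ _); lia.
rewrite (eq_bigr _ (fun i _ => e1 i)) (eq_bigr _ (fun i _ => e2 i)) !big_split /=.
rewrite prodc prodrXr.
have es : (\sum_(i < n.+1) 2 * i = n * n.+1)%N.
  rewrite -big_distrr /= sum_id; have := bin2_dbl n.+1; simpl; lia.
have eP : \prod_(i < n.+1) (1 + qq ^+ (2 * (n - i) + 1)) =
          \prod_(k < n.+1) (1 + qq ^+ (2 * k + 1)).
  by rewrite [RHS](@bigR _ _ _ (fun k : nat => 1 + qq ^+ (2 * k + 1)) n.+1).
rewrite eP es -exprM; set P := \prod_(k < n.+1) _.
rewrite expr2 mulrACA -exprD; congr (qq ^+ _ * _); lia.
Qed.

Definition tri (k : nat) : nat := 'C(k.+1, 2).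

Lemma expP n i : (i <= n + n.+1)%N ->
  ('C(i, 2) + n * (n + n.+1 - i) =
   tri ((n - i) + (i - n.+1)) + ('C(n, 2) + n + n * n))%N.
Proof.
move=> hi; rewrite /tri.
have hb := bin2_dbl i; have hn := bin2_dbl n.
case: (leqP i n) => h.
  have -> : (i - n.+1 = 0)%N by apply/eqP; rewrite subn_eq0 ltnW.
  rewrite addn0; have hk := bin2_dbl (n - i).+1.
  have [j ej] : exists j, n = (i + j)%N by exists (n - i)%N; rewrite subnKC.
  subst n; rewrite addKn in hk *.
  move: hk hb hn hi; rewrite /=; case: i {h} => [|i] /=; case: j => [|j] /=; nia.
have -> : (n - i = 0)%N by apply/eqP; rewrite subn_eq0 ltnW.
rewrite add0n; have hk := bin2_dbl (i - n.+1).+1.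
have [j ej] : exists j, i = (n.+1 + j)%N by exists (i - n.+1)%N; rewrite subnKC.
subst i; rewrite addKn in hk *.
move: hk hb hn hi; rewrite /=; case: n {h} => [|n] /=; case: j => [|j] /=; nia.
Qed.

Lemma tpPsi n :
  qq ^+ ('C(n, 2) + n + n * n) * (2%:R * (\prod_(k < n) (1 + qq ^+ k.+1)) ^+ 2) =
  qq ^+ ('C(n, 2) + n + n * n) *
  \sum_(i < (n + n.+1).+1) qb qq (n + n.+1) i * qq ^+ (tri ((n - i) + (i - n.+1))).
Proof.
have H := qbinom qq 1 (qq ^+ n) (n + n.+1).
rewrite mulr_sumr; transitivity (\sum_(i < (n + n.+1).+1) qT qq 1 (qq ^+ n) (n + n.+1) i); last first.
  apply: eq_bigr => i _; rewrite /qT expr1n mulr1 -!exprM -mulrA -exprD mulrCA -exprD.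
  congr (_ * qq ^+ _); have hi : (i <= n + n.+1)%N by rewrite -ltnS.
  have := expP hi; lia.
rewrite -H {H} (@bigA _ _ _ (fun i => qq ^+ n + 1 * qq ^+ i) n n.+1) big_ord_recl /=.
have e1 : forall i : 'I_n, qq ^+ n + 1 * qq ^+ i = qq ^+ i * (1 + qq ^+ (n - i)).
  move=> i; have := ltn_ord i => hi.
  by rewrite mul1r mulrDr mulr1 -exprD addrC subnKC // ltnW.
have e2 : forall j : 'I_n, qq ^+ n + 1 * qq ^+ (n + lift ord0 j) =
   qq ^+ n * (1 + qq ^+ j.+1).
  by move=> j; rewrite lift0 mul1r mulrDr mulr1 -exprD addnS.
rewrite (eq_bigr _ (fun i _ => e1 i)) (eq_bigr _ (fun i _ => e2 i)) !big_split /=.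
rewrite prodc prodrXr sum_id addn0 mul1r.
have eP : \prod_(i < n) (1 + qq ^+ (n - i)) = \prod_(k < n) (1 + qq ^+ k.+1).
  rewrite [RHS](@bigR _ _ _ (fun k : nat => 1 + qq ^+ k.+1) n).
  by apply: eq_bigr => i _; have := ltn_ord i => hi; congr (1 + qq ^+ _); lia.
rewrite eP -exprM; set P := \prod_(k < n) _.
have -> : qq ^+ n + qq ^+ n = 2%:R * qq ^+ n by rewrite mulr_natl mulr2n.
rewrite !exprD; ring.
Qed.

Lemma sum_ord_eq m m' (f : nat -> ps) : m = m' ->
  \sum_(i < m) f i = \sum_(i < m') f i.
Proof. by move=> ->. Qed.

Lemma sum_dst (f : nat -> ps) a :
  \sum_(i < (a + a).+1) f (dst i a) = 2%:R * \sum_(k < a.+1) f k - f 0%N.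
Proof.
rewrite (@sum_ord_eq _ (a + a.+1) (fun i => f (dst i a)) (esym (addnS a a))).
rewrite (@bigA _ _ _ (fun i => f (dst i a)) a a.+1) /=.
rewrite (@bigR _ _ _ (fun i => f (dst i a)) a) /=.
have e1 : forall i : 'I_a, f (dst (a - i.+1) a) = f i.+1.
  move=> i; have := ltn_ord i => hi; congr f; rewrite /dst; lia.
have e2 : forall i : 'I_a.+1, f (dst (a + i) a) = f i.
  move=> i; congr f; rewrite /dst; lia.
rewrite (eq_bigr _ (fun i _ => e1 i)) (eq_bigr _ (fun i _ => e2 i)).
rewrite big_ord_recl /= mulr_natl mulr2n; set S := \sum_(i < a) _.
by set T := f 0%N; ring.
Qed.

Lemma sum_tri (f : nat -> ps) n :
  \sum_(i < (n + n.+1).+1) f (tri ((n - i) + (i - n.+1))) =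
  2%:R * \sum_(k < n.+1) f (tri k).
Proof.
rewrite (@sum_ord_eq _ (n.+1 + n.+1) (fun i => f (tri ((n - i) + (i - n.+1)))) (esym (addSn n n.+1))).
rewrite (@bigA _ _ _ (fun i => f (tri ((n - i) + (i - n.+1)))) n.+1 n.+1) /=.
rewrite (@bigR _ _ _ (fun i => f (tri ((n - i) + (i - n.+1)))) n.+1) /=.
have e1 : forall i : 'I_n.+1, f (tri ((n - (n - i)) + (n - i - n.+1))) = f (tri i).
  move=> i; have := ltn_ord i => hi; congr (f (tri _)); lia.
have e2 : forall i : 'I_n.+1, f (tri ((n - (n.+1 + i)) + (n.+1 + i - n.+1))) = f (tri i).
  move=> i; congr (f (tri _)); lia.
rewrite (eq_bigr _ (fun i _ => e1 i)) (eq_bigr _ (fun i _ => e2 i)).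
by rewrite mulr_natl mulr2n.
Qed.

Definition stable (s : nat -> ps) :=
  forall N n M, (N <= n)%N -> (n <= M)%N -> eqN N (s M) (s n).
Definition plim (s : nat -> ps) : ps := fun n => s n.+1 n.

Lemma plim_eqN s N M : stable s -> (N <= M)%N -> eqN N (plim s) (s M).
Proof.
move=> hs NM i iN; rewrite /plim.
by rewrite (hs i.+1 i.+1 M) //; apply: leq_trans iN NM.
Qed.

Lemma psum_stable (g : nat -> nat) : (forall k, k <= g k)%N ->
  stable (fun n => \sum_(k < n) qq ^+ g k).
Proof.
move=> hg N n M Nn nM /=.
rewrite (@sum_ord_eq _ (n + (M - n)) (fun k => qq ^+ g k) (esym (subnKC nM))).
rewrite (@bigA _ _ _ (fun k => qq ^+ g k) n (M - n)) /=.
rewrite -[X in eqN _ _ X]addr0; apply: eqN_add; first exact: eqN_refl.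
have h0 : eqN N (\sum_(i < M - n) qq ^+ g (n + i)%N) (\sum_(i < M - n) (0 : ps)).
  refine (@eqN_sum N _ _ _ _ _ _) => i _; apply: eqN_qX0.
  by apply: leq_trans (hg _); apply: leq_trans Nn (leq_addr _ _).
by rewrite big1_eq in h0.
Qed.

Definition Ssq (n : nat) : ps := \sum_(k < n) qq ^+ (k * k).
Definition Up (n : nat) : ps := 2%:R * Ssq n - 1.
Definition Psp (n : nat) : ps := \sum_(k < n) qq ^+ tri k.
Definition U : ps := locked (plim Up).
Definition Psi : ps := locked (plim Psp).

Lemma Ssq_stable : stable Ssq.
Proof. by apply: (@psum_stable (fun k => k * k)%N) => k; case: k => // k; rewrite leq_pmulr. Qed.
Lemma Psp_stable : stable Psp.
Proof.
apply: (@psum_stable tri) => k; rewrite /tri; have := bin2_dbl k.+1; simpl; nia.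
Qed.
Lemma Up_stable : stable Up.
Proof.
move=> N n M Nn nM; rewrite /Up; apply: eqN_sub; last exact: eqN_refl.
by apply: eqN_mulr; [exact: eqN_refl| exact: Ssq_stable].
Qed.
Lemma U_eqN N M : (N <= M)%N -> eqN N U (Up M).
Proof. by move=> h; rewrite /U -lock; apply: plim_eqN => //; exact: Up_stable. Qed.
Lemma Psi_eqN N M : (N <= M)%N -> eqN N Psi (Psp M).
Proof. by move=> h; rewrite /Psi -lock; apply: plim_eqN => //; exact: Psp_stable. Qed.

Definition Oo (k : nat) : ps := \prod_(j < k) (1 + qq ^+ (2 * j + 1)).
Definition Ee (k : nat) : ps := \prod_(j < k) (1 + qq ^+ j.+1).

Lemma prodO k : Oo k * poch qq (k + k) * poch (qq ^+ 4) k =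
  poch (qq ^+ 2) k * poch (qq ^+ 2) (k + k).
Proof.
elim: k => [|k IH]; first by rewrite /Oo big_ord0 !poch0 !mulr1.
rewrite addSn addnS !pochS /Oo big_ord_recr /= -/(Oo k) -!exprM.
set t := qq ^+ (2 * k + 1).
have p1 : qq ^+ (4 * k.+1) = t * t * qq ^+ 2 by rewrite /t -!exprD; congr (qq ^+ _); lia.
have p2 : qq ^+ (2 * k.+1) = t * qq by rewrite /t -exprSr; congr (qq ^+ _); lia.
have p3 : qq ^+ (2 * (k + k).+1) = t * t by rewrite /t -!exprD; congr (qq ^+ _); lia.
have p4 : qq ^+ (2 * (k + k).+2) = t * t * qq ^+ 2 by rewrite /t -!exprD; congr (qq ^+ _); lia.
have p5 : qq ^+ (k + k).+2 = t * qq by rewrite /t -exprSr; congr (qq ^+ _); lia.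
have p6 : qq ^+ (k + k).+1 = t by rewrite /t; congr (qq ^+ _); lia.
rewrite p1 p2 p3 p4 p5 p6.
move: IH; set A := Oo k; set B := poch qq (k + k); set C := poch (qq ^+ 4) k.
set D := poch (qq ^+ 2) k; set E := poch (qq ^+ 2) (k + k) => IH.
have -> : A * (1 + t) * (B * (1 - t) * (1 - t * qq)) * (C * (1 - t * t * qq ^+ 2)) =
  (A * B * C) * ((1 + t) * (1 - t) * (1 - t * qq) * (1 - t * t * qq ^+ 2)) by ring.
rewrite IH; ring.
Qed.

Lemma prodE k : Ee k * poch qq k = poch (qq ^+ 2) k.
Proof.
elim: k => [|k IH]; first by rewrite /Ee big_ord0 !poch0 mulr1.
rewrite !pochS /Ee big_ord_recr /= -/(Ee k) -!exprM -IH.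
have -> : (2 * k.+1 = k.+1 + k.+1)%N by lia.
rewrite exprD; set t := qq ^+ k.+1; set A := Ee k; set B := poch qq k; ring.
Qed.

Lemma R1 : U * F 1 ^+ 2 * F 4 ^+ 2 = F 2 ^+ 5.
Proof.
apply: eqN_all => N.
set n := (N + N)%N; set m := (n.+1 + n.+1)%N.
set c := fun i => qq ^+ (dst i n.+1 * dst i n.+1).
set S := \sum_(i < m.+1) c i.
set S' := \sum_(i < m.+1) qb (qq ^+ 2) m i * c i.
have hS : eqN N U S.
  refine (eqN_trans (@U_eqN N n.+2 _) _); first by rewrite /n; lia.
  rewrite /S /c /Up /Ssq (@sum_dst (fun k => qq ^+ (k * k)) n.+1) expr0.
  exact: eqN_refl.
have hS' : S' = Oo n.+1 ^+ 2.
  apply: (@qX_cancel (n * n.+1 + (2 * n + 1) * n.+1)); rewrite tpU /S' /c.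
  by congr (_ * _); apply: eq_bigr => i _; rewrite mulnn.
have hlim : eqN N (S' * F 2) S.
  apply: sum_lim => // i im h; apply: eqN_qX0.
  rewrite /dst; move: h im; rewrite /m /n => h im.
  case/orP: h => h; nia.
have e1 : eqN N (F 1) (poch qq m).
  by rewrite -[qq]expr1; apply: F_poch => //; rewrite /m /n; lia.
have e4 : eqN N (F 4) (poch (qq ^+ 4) n.+1) by apply: F_poch => //; rewrite /n; lia.
have e2 : eqN N (F 2) (poch (qq ^+ 2) n.+1) by apply: F_poch => //; rewrite /n; lia.
have e2' : eqN N (F 2) (poch (qq ^+ 2) m) by apply: F_poch => //; rewrite /m /n; lia.
have step1 : eqN N (U * F 1 ^+ 2 * F 4 ^+ 2)
    ((S' * F 2) * poch qq m ^+ 2 * poch (qq ^+ 4) n.+1 ^+ 2).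
  apply: eqN_mulr; [apply: eqN_mulr|]; try apply: eqN_exp => //.
  exact: eqN_trans hS (eqN_sym hlim).
refine (eqN_trans step1 _).
have -> : S' * F 2 * poch qq m ^+ 2 * poch (qq ^+ 4) n.+1 ^+ 2 =
   F 2 * (Oo n.+1 * poch qq m * poch (qq ^+ 4) n.+1) ^+ 2.
  by rewrite hS'; ring.
rewrite prodO -/m.
have -> : F 2 ^+ 5 = F 2 * (F 2 * F 2) ^+ 2 by ring.
apply: eqN_mulr; first exact: eqN_refl.
by apply: eqN_exp; apply: eqN_mulr; apply: eqN_sym.
Qed.

Lemma R2 : Psi * F 1 = F 2 ^+ 2.
Proof.
apply: eqN_all => N; apply: eqN_two_cancel.
set n := (N + N)%N; set m := (n + n.+1)%N.
set c := fun i => qq ^+ tri ((n - i) + (i - n.+1)).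
set S := \sum_(i < m.+1) c i.
set S' := \sum_(i < m.+1) qb (qq ^+ 1) m i * c i.
have hS : eqN N (2%:R * Psi) S.
  apply: (@eqN_trans _ _ (2%:R * Psp n.+1)).
    apply: eqN_mulr; first exact: eqN_refl.
    by apply: Psi_eqN; rewrite /n; lia.
  rewrite /S /c /Psp (@sum_tri (fun k => qq ^+ k) n); exact: eqN_refl.
have hS' : S' = 2%:R * Ee n ^+ 2.
  apply: (@qX_cancel ('C(n, 2) + n + n * n)); rewrite tpPsi /S' /c expr1.
  by [].
have hlim : eqN N (S' * F 1) S.
  apply: sum_lim => // i im h; apply: eqN_qX0.
  have hk : forall k, (k <= tri k)%N.
    by move=> k; rewrite /tri; have := bin2_dbl k.+1; simpl; nia.
  apply: leq_trans (hk _); move: h im; rewrite /m /n => h im.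
  case/orP: h => h; lia.
have e1 : eqN N (F 1) (poch qq n).
  by rewrite -[qq]expr1; apply: F_poch => //; rewrite /n; lia.
have e2 : eqN N (F 2) (poch (qq ^+ 2) n) by apply: F_poch => //; rewrite /n; lia.
have step1 : eqN N (2%:R * (Psi * F 1)) ((S' * F 1) * poch qq n).
  rewrite mulrA; apply: eqN_mulr => //.
  exact: eqN_trans hS (eqN_sym hlim).
refine (eqN_trans step1 _).
have -> : S' * F 1 * poch qq n = 2%:R * (Ee n * poch qq n) * (Ee n * F 1).
  by rewrite hS'; ring.
apply: (@eqN_trans _ _ (2%:R * (Ee n * poch qq n) * (Ee n * poch qq n))).
  apply: eqN_mulr; first exact: eqN_refl.
  by apply: eqN_mulr; [exact: eqN_refl| exact: e1].
rewrite prodE; have -> : 2%:R * F 2 ^+ 2 = 2%:R * F 2 * F 2 by ring.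
apply: eqN_mulr; [apply: eqN_mulr; first exact: eqN_refl|]; apply: eqN_sym; exact: e2.
Qed.

Definition D (a : ps) : ps := fun n => if odd n then 0 else a n./2.

Lemma eqN_D N a b : eqN N a b -> eqN (N + N) (D a) (D b).
Proof.
move=> h i iN; rewrite /D; case: ifP => // _; apply: h.
by rewrite -divn2; lia.
Qed.

Lemma eqN_D' N a b : eqN N a b -> eqN N (D a) (D b).
Proof. by move=> h; apply: (eqN_le _ (eqN_D h)); apply: leq_addr. Qed.

Lemma D_ofp p : D (ofp p) = ofp (p \Po 'X^2).
Proof.
apply: psext => n; rewrite /D /ofp coef_comp_poly_Xn // dvdn2 divn2.
by case: (odd n).
Qed.

Lemma D_add a b : D (a + b) = D a + D b.
Proof. by apply: psext => n; rewrite /D !psaddC; case: (odd n); rewrite ?addr0. Qed.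
Lemma D_opp a : D (- a) = - D a.
Proof. by apply: psext => n; rewrite /D !psoppC; case: (odd n); rewrite ?oppr0. Qed.
Lemma D_sub a b : D (a - b) = D a - D b.
Proof. by rewrite D_add D_opp. Qed.
Lemma D0 : D 0 = 0.
Proof. by apply: psext => n; rewrite /D; case: (odd n). Qed.
Lemma D1 : D 1 = 1.
Proof. by rewrite ps1E ofp1 D_ofp comp_polyC. Qed.
Lemma Dq : D qq = qq ^+ 2.
Proof.
have e : ofp ('X : {poly int}) = qq by rewrite -[X in ofp X]expr1 ofpXn expr1.
by rewrite -{1}e D_ofp comp_polyX ofpXn.
Qed.

Lemma D_mul a b : D (a * b) = D a * D b.
Proof.
apply: eqN_all => M; apply: (@eqN_le (M + M)); first exact: leq_addl.
have ea := @eqN_tr M a; have eb := @eqN_tr M b.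
refine (eqN_trans (eqN_D (eqN_mulr ea eb)) _).
rewrite -ofpM D_ofp comp_polyM ofpM -!D_ofp.
by apply: eqN_mulr; apply: eqN_sym; apply: eqN_D.
Qed.

Lemma D_exp a k : D (a ^+ k) = D a ^+ k.
Proof. by elim: k => [|k IH]; rewrite ?expr0 ?D1 // !exprS D_mul IH. Qed.
Lemma D_prod I (r : seq I) (P : pred I) (f : I -> ps) :
  D (\prod_(i <- r | P i) f i) = \prod_(i <- r | P i) D (f i).
Proof. by elim/big_rec2: _ => [|i y1 y2 _ <-]; rewrite ?D1 // D_mul. Qed.
Lemma D_sum I (r : seq I) (P : pred I) (f : I -> ps) :
  D (\sum_(i <- r | P i) f i) = \sum_(i <- r | P i) D (f i).
Proof. by elim/big_rec2: _ => [|i y1 y2 _ <-]; rewrite ?D0 // D_add. Qed.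
Lemma D_nat k : D k%:R = k%:R.
Proof. by elim: k => [|k IH]; rewrite ?D0 // !mulrS D_add D1 IH. Qed.
Lemma DqX e : D (qq ^+ e) = qq ^+ (2 * e).
Proof. by rewrite D_exp Dq -exprM. Qed.

Lemma D_pr d K : D (pr d K) = pr (2 * d) K.
Proof.
rewrite /pr D_prod; apply: eq_bigr => m _.
by rewrite D_sub D1 DqX mulnCA.
Qed.

Lemma DF d : (0 < d)%N -> D (F d) = F (2 * d).
Proof.
move=> d0; apply: eqN_all => M; apply: (@eqN_le (M + M)); first exact: leq_addl.
refine (eqN_trans (eqN_D (@fk_eqN d M (M + M) d0 (leq_addr _ _))) _).
rewrite D_pr; apply: eqN_sym; apply: fk_eqN; first by rewrite muln_gt0.
by [].
Qed.

Lemma inv_uniq (x a ia : ps) : ia * a = 1 -> x * a = 1 -> x = ia.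
Proof. by move=> h1 h2; rewrite -[x]mulr1 -h1 mulrCA h2 mulr1. Qed.

Lemma DiF d : (0 < d)%N -> D (iF d) = iF (2 * d).
Proof.
move=> d0; apply: (@inv_uniq _ (F (2 * d))); first exact: fk_inv.
by rewrite -DF // -D_mul fk_inv D1.
Qed.

Lemma even_part a b n : (D a + qq * D b) (n + n)%N = a n.
Proof.
rewrite psaddC qmulC /D addnn odd_double doubleK.
case: n => [|n] //=; first by rewrite addr0.
by rewrite odd_double addr0.
Qed.

Lemma sum_parity (f : nat -> ps) M :
  \sum_(k < M + M) f k = \sum_(l < M) (f (2 * l)%N + f (2 * l + 1)%N).
Proof.
elim: M => [|M IH]; first by rewrite !big_ord0.
rewrite (@sum_ord_eq (M.+1 + M.+1) (M + M).+2 f); last by rewrite addSn addnS.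
rewrite -(big_mkord xpredT f) !big_nat_recr /= ?leq0n // big_mkord IH big_ord_recr /= -addrA; congr (_ + (f _ + f _)); lia.
Qed.

Lemma Ssq_split M : Ssq (M + M) = D (D (Ssq M)) + qq * D (D (D (Psp M))).
Proof.
rewrite /Ssq /Psp (@sum_parity (fun k => qq ^+ (k * k)%N) M) /= !D_sum mulr_sumr -big_split /=.
apply: eq_bigr => l _; rewrite !DqX -exprS; congr (qq ^+ _ + qq ^+ _).
  lia.
rewrite /tri; have := bin2_dbl l.+1; simpl; nia.
Qed.

Lemma R4 : U = D (D U) + 2%:R * qq * D (D (D Psi)).
Proof.
apply: eqN_all => N.
have h1 : eqN N U (Up (N + N)) by apply: U_eqN; apply: leq_addr.
refine (eqN_trans h1 _).
have -> : Up (N + N) = D (D (Up N)) + 2%:R * qq * D (D (D (Psp N))).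
  rewrite /Up Ssq_split !(D_sub, D_mul, D_nat, D1); ring.
apply: eqN_add.
  by apply: eqN_D'; apply: eqN_D'; apply: eqN_sym; apply: U_eqN.
apply: eqN_mulr; first exact: eqN_refl.
by apply: eqN_D'; apply: eqN_D'; apply: eqN_D'; apply: eqN_sym; apply: Psi_eqN.
Qed.

Lemma unit_cancel (x y u iu : ps) : iu * u = 1 -> x * u = y * u -> x = y.
Proof.
move=> h e; have ex : x = iu * (x * u) by rewrite mulrCA h mulr1.
have ey : y = iu * (y * u) by rewrite mulrCA h mulr1.
by rewrite ex ey e.
Qed.

Lemma V0 (V : ps) : V = - D V -> V = 0.
Proof.
move=> h; apply: psext => n; rewrite ps0C.
elim: n {-2}n (leqnn n) => [|k IH] n hn.
  move: hn; rewrite leqn0 => /eqP ->.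
  have := congr1 (fun f : ps => f 0%N) h; rewrite psoppC /D /= => /eqP.
  by rewrite -subr_eq0 opprK -mulr2n -mulr_natl mulf_eq0 /= => /eqP.
have := congr1 (fun f : ps => f n) h; rewrite psoppC /D.
case: ifP => [_ ->|on]; first by rewrite oppr0.
move=> ->; rewrite IH ?oppr0 //.
rewrite -divn2; lia.
Qed.

Lemma hU : U = F 2 ^+ 5 * iF 1 ^+ 2 * iF 4 ^+ 2.
Proof.
have -> : U = U * (iF 1 * F 1) ^+ 2 * (iF 4 * F 4) ^+ 2 by rewrite !fk_inv !expr1n !mulr1.
rewrite -R1; ring.
Qed.

Lemma hPsi : Psi = F 2 ^+ 2 * iF 1.
Proof.
have -> : Psi = Psi * (iF 1 * F 1) by rewrite fk_inv mulr1.
rewrite -R2; ring.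
Qed.

Lemma hDU : D U = F 4 ^+ 5 * iF 2 ^+ 2 * iF 8 ^+ 2.
Proof. by rewrite {1}hU !(D_mul, D_exp) !DF // !DiF. Qed.

Lemma hDPsi : D Psi = F 4 ^+ 2 * iF 2.
Proof. by rewrite hPsi !(D_mul, D_exp) !DF // !DiF. Qed.

Lemma hD2Psi : D (D Psi) = F 8 ^+ 2 * iF 4.
Proof. by rewrite hDPsi !(D_mul, D_exp) !DF // !DiF. Qed.

Lemma UDPsi : U * D Psi = Psi ^+ 2.
Proof.
rewrite hU hDPsi hPsi.
have h1 := fk_inv 1; have h2 := fk_inv 2; have h4 := fk_inv 4.
set a1 := iF 1; set a2 := iF 2; set a4 := iF 4; set f1 := F 1; set f2 := F 2; set f4 := F 4.
have -> : f2 ^+ 5 * a1 ^+ 2 * a4 ^+ 2 * (f4 ^+ 2 * a2) =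
  f2 ^+ 4 * a1 ^+ 2 * (a2 * f2) * (a4 * f4) ^+ 2 by ring.
by rewrite h2 h4 expr1n !mulr1; ring.
Qed.

Lemma R5 : U ^+ 2 = D U ^+ 2 + 4%:R * qq * D (D Psi) ^+ 2.
Proof.
set V := U ^+ 2 - D U ^+ 2 - 4%:R * qq * D (D Psi) ^+ 2.
suff hV : V = 0 by apply/eqP; rewrite -subr_eq0; apply/eqP; rewrite -hV /V; ring.
apply: V0.
have e1 : D (D U) * D (D (D Psi)) = D (D Psi) ^+ 2.
  by rewrite -!D_mul UDPsi !D_exp.
have hUU : U ^+ 2 = D (D U) ^+ 2 + 4%:R * qq * D (D Psi) ^+ 2 +
             4%:R * qq ^+ 2 * D (D (D Psi)) ^+ 2.
  rewrite -e1 {1}R4; ring.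
rewrite /V !(D_sub, D_mul, D_exp, D_nat, Dq) hUU; ring.
Qed.

Lemma DF1 : D (F 1) = F 2. Proof. by rewrite DF. Qed.
Lemma DF2 : D (F 2) = F 4. Proof. by rewrite DF. Qed.
Lemma DF4 : D (F 4) = F 8. Proof. by rewrite DF. Qed.
Lemma DiF1 : D (iF 1) = iF 2. Proof. by rewrite DiF. Qed.
Lemma DiF2 : D (iF 2) = iF 4. Proof. by rewrite DiF. Qed.
Lemma DiF4 : D (iF 4) = iF 8. Proof. by rewrite DiF. Qed.

Definition Xs : ps := F 2 ^+ 9 * iF 1 ^+ 18 *
  (D U ^+ 3 + 3%:R * qq * D U * (2%:R * D (D Psi)) ^+ 2).
Definition Zs : ps := F 2 ^+ 9 * iF 1 ^+ 18 *
  (3%:R * D U ^+ 2 * (2%:R * D (D Psi)) + qq * (2%:R * D (D Psi)) ^+ 3).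

Lemma G_eq : F 4 ^+ 3 * (iF 1 ^+ 6 * iF 2 ^+ 3) = D Xs + qq * D Zs.
Proof.
have h2 := fk_inv 2; have h4 := fk_inv 4.
have e1 : iF 1 ^+ 6 = U ^+ 3 * F 4 ^+ 6 * iF 2 ^+ 15.
  rewrite hU.
  have -> : (F 2 ^+ 5 * iF 1 ^+ 2 * iF 4 ^+ 2) ^+ 3 * F 4 ^+ 6 * iF 2 ^+ 15 =
    iF 1 ^+ 6 * (iF 2 * F 2) ^+ 15 * (iF 4 * F 4) ^+ 6 by ring.
  by rewrite h2 h4 !expr1n !mulr1.
rewrite e1 /Xs /Zs !(D_add, D_mul, D_exp, D_nat, Dq) DF2 DiF1.
have e4 : D (D U) = U - 2%:R * qq * D (D (D Psi)) by rewrite {2}R4; ring.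
rewrite e4; ring.
Qed.

Lemma X_alg (R : comNzRingType) (f2 f4 f8 a1 a2 a4 a8 q : R) :
  a2 * f2 = 1 -> a4 * f4 = 1 -> a8 * f8 = 1 ->
  f2 ^+ 9 * a1 ^+ 18 * (f4 ^+ 5 * a2 ^+ 2 * a8 ^+ 2) *
  ((f2 ^+ 5 * a1 ^+ 2 * a4 ^+ 2) ^+ 2 + 8%:R * q * (f8 ^+ 2 * a4) ^+ 2) =
  8%:R * (q * (f2 ^+ 7 * (f4 ^+ 3 * (f8 ^+ 2 * a1 ^+ 18)))) +
  f2 ^+ 17 * (f4 * (a1 ^+ 22 * a8 ^+ 2)).
Proof.
move=> h2 h4 h8.
have -> : f2 ^+ 9 * a1 ^+ 18 * (f4 ^+ 5 * a2 ^+ 2 * a8 ^+ 2) *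
  ((f2 ^+ 5 * a1 ^+ 2 * a4 ^+ 2) ^+ 2 + 8%:R * q * (f8 ^+ 2 * a4) ^+ 2) =
  f2 ^+ 17 * f4 * a1 ^+ 22 * a8 ^+ 2 * (a2 * f2) ^+ 2 * (a4 * f4) ^+ 4 +
  8%:R * q * f2 ^+ 7 * f4 ^+ 3 * f8 ^+ 2 * a1 ^+ 18 * (a2 * f2) ^+ 2 *
    (a4 * f4) ^+ 2 * (a8 * f8) ^+ 2 by ring.
rewrite h2 h4 h8 !expr1n !mulr1; ring.
Qed.

Lemma X_eq : Xs = 8%:R * (qq * (F 2 ^+ 7 * (F 4 ^+ 3 * (F 8 ^+ 2 * iF 1 ^+ 18)))) +
  F 2 ^+ 17 * (F 4 * (iF 1 ^+ 22 * iF 8 ^+ 2)).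
Proof.
have -> : Xs = F 2 ^+ 9 * iF 1 ^+ 18 * D U *
   ((D U ^+ 2 + 4%:R * qq * D (D Psi) ^+ 2) + 8%:R * qq * D (D Psi) ^+ 2).
  by rewrite /Xs; ring.
rewrite -R5 hDU hD2Psi hU.
refine (@X_alg _ (F 2) (F 4) (F 8) (iF 1) (iF 2) (iF 4) (iF 8) qq (fk_inv 2) (fk_inv 4) (fk_inv 8)).
Qed.

Theorem mainTheorem5 :
  forall n : nat,
    btbar (2 * n)%N =
    fps_add
      (fps_scale 8 (fps_mul fps_q
         (fps_mul (fps_pow (fk 2) 7) (fps_mul (fps_pow (fk 4) 3)
           (fps_mul (fps_pow (fk 8) 2) (fps_pow (fps_inv (fk 1)) 18))))))
      (fps_mul (fps_pow (fk 2) 17) (fps_mul (fk 4)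
         (fps_mul (fps_pow (fps_inv (fk 1)) 22) (fps_pow (fps_inv (fk 8)) 2)))) n.
Proof.
move=> n.
have hG : (btbar_series : ps) = D Xs + qq * D Zs.
  rewrite -G_eq /btbar_series !fps_mulE !fps_powE; by [].
rewrite /btbar mul2n -addnn hG even_part X_eq.
by rewrite fps_addE fps_scaleE !fps_mulE !fps_powE.
Qed.
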